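(* Let $\mathcal G_1\xleftarrow{P_1}\mathcal H\xrightarrow{P_2}\mathcal G_2$ be a fibrant span of essentially finite groupoids, $\rho_i:\mathcal G_i\to\mathrm{Vect}_{\mathbb C}$ functors, and $\sigma:\rho_1P_1\Rightarrow\rho_2P_2$ a natural transformation. For $G_1\in\mathrm{Ob}\,\mathcal G_1$, $G_2\in\mathrm{Ob}\,\mathcal G_2$ write $\{G_1|\mathcal H|G_2\}=\mathrm{Fib}(\langle P_1,P_2\rangle,(G_1,G_2))$ and let $\mathcal R(\mathcal H,G_1,G_2)$ be a set of representatives of its path-components (this set is finite and all automorphism groups in the fibre are finite). Then the linear map $$S^{G_1,G_2}_\sigma=\frac{1}{|\mathrm{Aut}_{\mathcal G_2}(G_2)|}\sum_{H\in\mathcal R(\mathcal H,G_1,G_2)}\frac{1}{|\mathrm{Aut}_{\{G_1|\mathcal H|G_2\}}(H)|}\,\sigma_H:\rho_1(G_1)\to\rho_2(G_2)$$ is independent of the choice of $\mathcal R(\mathcal H,G_1,G_2)$ and takes values in the invariant subspace $\rho_2(G_2)^{\mathrm{Aut}_{\mathcal G_2}(G_2)}=\{x\in\rho_2(G_2)\mid \rho_2(g)x=x\ \forall g\in\mathrm{Aut}_{\mathcal G_2}(G_2)\}$.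
   Context: A groupoid is essentially finite if it is equivalent to a groupoid with finitely many objects and morphisms. A functor $F:\mathcal E\to\mathcal B$ of groupoids is a fibration if for every object $E$ and morphism $h:B'\to F(E)$ there is $g:E'\to E$ with $F(g)=h$; a span $\mathcal G_1\xleftarrow{P_1}\mathcal H\xrightarrow{P_2}\mathcal G_2$ is fibrant if $\langle P_1,P_2\rangle:\mathcal H\to\mathcal G_1\times\mathcal G_2$ is a fibration. For a functor $F:\mathcal A\to\mathcal B$ and $B\in\mathrm{Ob}\,\mathcal B$, the fibre $\mathrm{Fib}(F,B)$ has objects $A$ with $F(A)=B$ and morphisms the $f$ in $\mathcal A$ with $F(f)=1_B$. $\mathrm{Aut}_{\mathcal G}(G)=\hom_{\mathcal G}(G,G)$. *)

(* Defs.v *)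
From HB Require Import structures.
From mathcomp Require Import all_boot all_algebra complex Rstruct.
From Stdlib Require Import Rdefinitions.

Set Implicit Arguments.
Unset Strict Implicit.
Unset Printing Implicit Defensive.
Import GRing.Theory.
Local Open Scope ring_scope.

Definition CC : fieldType := (Rdefinitions.R)[i].

Record groupoid := Groupoid {
  Ob : Type;
  Mor : Ob -> Ob -> Type;
  idm : forall a, Mor a a;
  comp : forall a b c, Mor b c -> Mor a b -> Mor a c;
  inv : forall a b, Mor a b -> Mor b a;
  comp_assoc : forall a b c d (h : Mor c d) (g : Mor b c) (f : Mor a b),
      comp h (comp g f) = comp (comp h g) f;
  comp_id_l : forall a b (f : Mor a b), comp (idm b) f = f;
  comp_id_r : forall a b (f : Mor a b), comp f (idm a) = f;
  inv_l : forall a b (f : Mor a b), comp (inv f) f = idm a;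
  inv_r : forall a b (f : Mor a b), comp f (inv f) = idm b
}.
Arguments Mor {_} _ _.
Arguments idm {_} _.
Arguments comp {_ _ _ _} _ _.
Arguments inv {_ _ _} _.

Record functor (C D : groupoid) := Functor {
  fo : Ob C -> Ob D;
  fm : forall a b, Mor a b -> Mor (fo a) (fo b);
  fm_id : forall a, fm (idm a) = idm (fo a);
  fm_comp : forall a b c (g : Mor b c) (f : Mor a b),
      fm (comp g f) = comp (fm g) (fm f)
}.
Arguments fo {C D} _ _.
Arguments fm {C D} _ {a b} _.

Definition id_functor (C : groupoid) : functor C C :=
  @Functor C C (fun a => a) (fun a b f => f) (fun a => erefl) (fun a b c g f => erefl).

Program Definition functor_comp (C D E : groupoid) (G : functor D E) (F : functor C D)
  : functor C E :=
  @Functor C E (fun a => fo G (fo F a)) (fun a b f => fm G (fm F f)) _ _.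
Next Obligation. by rewrite !fm_id. Qed.
Next Obligation. by rewrite !fm_comp. Qed.

Record nat_trans (C D : groupoid) (F G : functor C D) := NatTrans {
  ntc : forall a, Mor (fo F a) (fo G a);
  nt_nat : forall a b (f : Mor a b), comp (fm G f) (ntc a) = comp (ntc b) (fm F f)
}.

(* Equivalence of groupoids (in a groupoid every natural transformation
   is a natural isomorphism). *)
Definition equivalent (C D : groupoid) : Prop :=
  exists (F : functor C D) (G : functor D C),
    inhabited (nat_trans (functor_comp G F) (id_functor C)) /\
    inhabited (nat_trans (functor_comp F G) (id_functor D)).

Definition card_is (T : Type) (n : nat) : Prop :=
  exists f : 'I_n -> T, bijective f.
Definition finite_type (T : Type) : Prop := exists n, card_is T n.

Definition finite_groupoid (K : groupoid) : Prop :=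
  finite_type (Ob K) /\ finite_type {a : Ob K & {b : Ob K & Mor a b}}.

Definition essentially_finite (C : groupoid) : Prop :=
  exists K : groupoid, finite_groupoid K /\ equivalent C K.

Definition castHom (C : groupoid) (a a' b b' : Ob C) (ea : a = a') (eb : b = b')
  (f : Mor a b) : Mor a' b' :=
  match ea in _ = x, eb in _ = y return Mor x y with erefl, erefl => f end.

Definition fibration (C D : groupoid) (F : functor C D) : Prop :=
  forall (E : Ob C) (B' : Ob D) (h : Mor B' (fo F E)),
    exists (E' : Ob C) (e : fo F E' = B') (g : Mor E' E),
      castHom e erefl (fm F g) = h.

Section Prod.
Variables C D : groupoid.
Let PO := (Ob C * Ob D)%type.
Let PH (p q : PO) := (Mor p.1 q.1 * Mor p.2 q.2)%type.
Let pid (p : PO) : PH p p := (idm p.1, idm p.2).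
Let pcomp (p q r : PO) (g : PH q r) (f : PH p q) : PH p r :=
  (comp g.1 f.1, comp g.2 f.2).
Let pinv (p q : PO) (f : PH p q) : PH q p := (inv f.1, inv f.2).
Lemma prod_assoc p q r s (h : PH r s) (g : PH q r) (f : PH p q) :
  pcomp h (pcomp g f) = pcomp (pcomp h g) f.
Proof. by rewrite /pcomp /= !comp_assoc. Qed.
Lemma prod_id_l p q (f : PH p q) : pcomp (pid q) f = f.
Proof. by case: f => f1 f2; rewrite /pcomp /= !comp_id_l. Qed.
Lemma prod_id_r p q (f : PH p q) : pcomp f (pid p) = f.
Proof. by case: f => f1 f2; rewrite /pcomp /= !comp_id_r. Qed.
Lemma prod_inv_l p q (f : PH p q) : pcomp (pinv f) f = pid p.
Proof. by rewrite /pcomp /= !inv_l. Qed.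
Lemma prod_inv_r p q (f : PH p q) : pcomp f (pinv f) = pid q.
Proof. by rewrite /pcomp /= !inv_r. Qed.
Definition prod_groupoid : groupoid :=
  @Groupoid PO PH pid pcomp pinv prod_assoc prod_id_l prod_id_r
    prod_inv_l prod_inv_r.
End Prod.

Program Definition pair_functor (H G1 G2 : groupoid)
  (P1 : functor H G1) (P2 : functor H G2) : functor H (prod_groupoid G1 G2) :=
  @Functor H (prod_groupoid G1 G2) (fun h => (fo P1 h, fo P2 h))
    (fun a b f => (fm P1 f, fm P2 f)) _ _.
Next Obligation. by rewrite !fm_id. Qed.
Next Obligation. by rewrite !fm_comp. Qed.

Definition fibrant_span (H G1 G2 : groupoid) (P1 : functor H G1) (P2 : functor H G2)
  : Prop := fibration (pair_functor P1 P2).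

Definition FibOb (C D : groupoid) (F : functor C D) (B : Ob D) : Type :=
  {A : Ob C | fo F A = B}.
Definition FibHom (C D : groupoid) (F : functor C D) (B : Ob D)
  (x y : FibOb F B) : Type :=
  {f : Mor (proj1_sig x) (proj1_sig y) |
     castHom (proj2_sig x) (proj2_sig y) (fm F f) = idm B}.

(* A (finite, enumerated) set of representatives of the path-components of
   the fibre; in a groupoid two objects are in the same path-component iff
   there is a morphism between them. *)
Definition is_rep_system (C D : groupoid) (F : functor C D) (B : Ob D)
  (n : nat) (r : 'I_n -> FibOb F B) : Prop :=
  (forall x : FibOb F B, exists i, inhabited (FibHom x (r i))) /\
  (forall i j, inhabited (FibHom (r i) (r j)) -> i = j).

Record vrep (G : groupoid) := VRep {
  rob : Ob G -> lmodType CC;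
  rm : forall a b, Mor a b -> {linear rob a -> rob b};
  rm_id : forall a (v : rob a), rm (idm a) v = v;
  rm_comp : forall a b c (g : Mor b c) (f : Mor a b) (v : rob a),
      rm (comp g f) v = rm g (rm f v)
}.
Arguments rob {G} _ _.
Arguments rm {G} _ {a b} _.

Program Definition vrep_comp (C D : groupoid) (rho : vrep D) (P : functor C D)
  : vrep C :=
  @VRep C (fun a => rob rho (fo P a)) (fun a b f => rm rho (fm P f)) _ _.
Next Obligation. by rewrite fm_id rm_id. Qed.
Next Obligation. by rewrite fm_comp rm_comp. Qed.

Record vnat (G : groupoid) (rho rho' : vrep G) := VNat {
  vnc : forall a, {linear rob rho a -> rob rho' a};
  vn_nat : forall a b (f : Mor a b) (v : rob rho a),
      vnc b (rm rho f v) = rm rho' f (vnc a v)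
}.
Arguments vnc {G rho rho'} _ _.

Definition castV (G : groupoid) (rho : vrep G) (a b : Ob G) (e : a = b)
  (v : rob rho a) : rob rho b :=
  match e in _ = x return rob rho x with erefl => v end.
Arguments castV {G} rho {a b} e v.

Section Ssigma.
Variables (H G1 G2 : groupoid) (P1 : functor H G1) (P2 : functor H G2).
Variables (rho1 : vrep G1) (rho2 : vrep G2)
  (sigma : vnat (vrep_comp rho1 P1) (vrep_comp rho2 P2)).
Variables (x1 : Ob G1) (x2 : Ob G2).

Definition FibSpanOb := FibOb (pair_functor P1 P2) (x1, x2).
Definition FibSpanHom (x y : FibSpanOb) := FibHom x y.

Definition sigma_fib (x : FibSpanOb) (v : rob rho1 x1) : rob rho2 x2 :=
  castV rho2 (f_equal snd (proj2_sig x))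
    (vnc sigma (proj1_sig x) (castV rho1 (esym (f_equal fst (proj2_sig x))) v)).

(* S^{G1,G2}_sigma computed from the representatives r : 'I_n -> fibre,
   with n2 = |Aut_{G2}(G2)| and a i = |Aut_{fibre}(r i)|. *)
Definition S_sigma (n2 n : nat) (r : 'I_n -> FibSpanOb) (a : 'I_n -> nat)
  (v : rob rho1 x1) : rob rho2 x2 :=
  (n2%:R : CC)^-1 *: \sum_(i < n) ((a i)%:R : CC)^-1 *: sigma_fib (r i) v.
End Ssigma.

(* Main.v *)
From Pilot Require Import Defs.
From mathcomp Require Import all_boot all_algebra.
From Stdlib Require Import ClassicalEpsilon ProofIrrelevance Eqdep.
Import Pilot.Defs.
Set Implicit Arguments. Unset Strict Implicit. Unset Printing Implicit Defensive.

Section GLemmas.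
Variable C : groupoid.

Lemma inv_uniq (a b : Ob C) (f : Mor a b) (g : Mor b a) :
  comp g f = idm a -> g = inv f.
Proof.
move=> h; have ->: g = comp g (idm b) by rewrite comp_id_r.
by rewrite -(inv_r f) comp_assoc h comp_id_l.
Qed.

Lemma inv_inv (a b : Ob C) (f : Mor a b) : inv (inv f) = f.
Proof. by symmetry; apply: inv_uniq; rewrite inv_r. Qed.

Lemma inv_id (a : Ob C) : inv (idm a) = idm a.
Proof. by symmetry; apply: inv_uniq; rewrite comp_id_l. Qed.

Lemma inv_comp (a b c : Ob C) (g : Mor b c) (f : Mor a b) :
  inv (comp g f) = comp (inv f) (inv g).
Proof.
symmetry; apply: inv_uniq.
by rewrite -comp_assoc (comp_assoc (inv g)) inv_l comp_id_l inv_l.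
Qed.

Lemma comp_cancel_r (a b c : Ob C) (f : Mor a b) (g g' : Mor b c) :
  comp g f = comp g' f -> g = g'.
Proof.
move=> h; have ->: g = comp g (idm b) by rewrite comp_id_r.
have ->: g' = comp g' (idm b) by rewrite comp_id_r.
by rewrite -(inv_r f) !comp_assoc h.
Qed.

Lemma castHom_comp (a a' b b' c c' : Ob C) (ea : a = a') (eb : b = b') (ec : c = c')
  (g : Mor b c) (f : Mor a b) :
  castHom ea ec (comp g f) = comp (castHom eb ec g) (castHom ea eb f).
Proof. by destruct ea, eb, ec. Qed.

Lemma castHom_inv (a a' b b' : Ob C) (ea : a = a') (eb : b = b') (f : Mor a b) :
  castHom eb ea (inv f) = inv (castHom ea eb f).
Proof. by destruct ea, eb. Qed.

Lemma castHom_id (a a' : Ob C) (ea : a = a') : castHom ea ea (idm a) = idm a'.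
Proof. by destruct ea. Qed.

Lemma castHom_trans (a a' a'' b b' b'' : Ob C) (ea : a = a') (eb : b = b')
  (ea' : a' = a'') (eb' : b' = b'') (f : Mor a b) :
  castHom ea' eb' (castHom ea eb f) = castHom (etrans ea ea') (etrans eb eb') f.
Proof. by destruct ea, eb, ea', eb'. Qed.

Lemma castHom_irr (a a' b b' : Ob C) (ea ea2 : a = a') (eb eb2 : b = b') (f : Mor a b) :
  castHom ea eb f = castHom ea2 eb2 f.
Proof. by rewrite (proof_irrelevance _ ea ea2) (proof_irrelevance _ eb eb2). Qed.

Lemma castHom_refl (a b : Ob C) (ea : a = a) (eb : b = b) (f : Mor a b) :
  castHom ea eb f = f.
Proof. by rewrite (castHom_irr ea erefl eb erefl). Qed.

End GLemmas.

Lemma fm_inv (C D : groupoid) (F : functor C D) (a b : Ob C) (f : Mor a b) :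
  fm F (inv f) = inv (fm F f).
Proof. by apply: inv_uniq; rewrite -fm_comp inv_l fm_id. Qed.

Lemma castHom_fst (C D : groupoid) (p p' q q' : Ob (prod_groupoid C D))
  (ep : p = p') (eq : q = q') (f : Mor p q) :
  (castHom ep eq f).1 = castHom (f_equal fst ep) (f_equal fst eq) f.1.
Proof. by destruct ep, eq. Qed.

Lemma castHom_snd (C D : groupoid) (p p' q q' : Ob (prod_groupoid C D))
  (ep : p = p') (eq : q = q') (f : Mor p q) :
  (castHom ep eq f).2 = castHom (f_equal snd ep) (f_equal snd eq) f.2.
Proof. by destruct ep, eq. Qed.

Lemma castV_rm (G : groupoid) (rho : vrep G) (a a' b b' : Ob G) (ea : a = a') (eb : b = b')
  (f : Mor a b) (w : rob rho a') :
  rm rho (castHom ea eb f) w = castV rho eb (rm rho f (castV rho (esym ea) w)).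
Proof. by destruct ea, eb. Qed.

Lemma castVK (G : groupoid) (rho : vrep G) (a b : Ob G) (e : a = b) (w : rob rho a) :
  castV rho (esym e) (castV rho e w) = w.
Proof. by destruct e. Qed.

Lemma castVKV (G : groupoid) (rho : vrep G) (a b : Ob G) (e : a = b) (w : rob rho b) :
  castV rho e (castV rho (esym e) w) = w.
Proof. by destruct e. Qed.

Lemma sig_eq (A : Type) (P : A -> Prop) (u v : {a | P a}) :
  proj1_sig u = proj1_sig v -> u = v.
Proof.
case: u => a pa; case: v => b pb /= e; subst b.
by rewrite (proof_irrelevance _ pa pb).
Qed.

Definition pb (P : Prop) : bool := if excluded_middle_informative P then true else false.
Lemma pbP P : reflect P (pb P).
Proof. by rewrite /pb; case: excluded_middle_informative => h; constructor. Qed.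

Lemma finite_fin (F : finType) (T : Type) (f : F -> T) : bijective f -> finite_type T.
Proof.
move=> bf; exists #|F|, (f \o enum_val); apply: bij_comp => //.
by exists enum_rank; [exact: enum_valK | exact: enum_rankK].
Qed.

Lemma fin_inj (T U : Type) (f : T -> U) : injective f -> finite_type U -> finite_type T.
Proof.
move=> injf [m [b [b' bK b'K]]].
pose g t := b' (f t).
have injg : injective g.
  by move=> x y /(congr1 b); rewrite /g !b'K => /injf.
pose S := [pred j : 'I_m | pb (exists t, g t = j)].
have hs : forall s : {j : 'I_m | S j}, exists t, g t = val s.
  by case=> j /=; move/pbP.
pose h (s : {j | S j}) := proj1_sig (constructive_indefinite_description _ (hs s)).
have hK : forall s, g (h s) = val s.
  move=> s; exact: (proj2_sig (constructive_indefinite_description _ (hs s))).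
have gS : forall t, S (g t) by move=> t; apply/pbP; exists t.
apply: (@finite_fin _ _ h); exists (fun t => exist _ (g t) (gS t)).
- by move=> s; apply: val_inj => /=; exact: hK.
- by move=> t /=; apply: injg; exact: hK.
Qed.

Lemma fin_prod (A B : Type) : finite_type A -> finite_type B -> finite_type (A * B).
Proof.
move=> [a [fa [ga h1 h2]]] [b [fb [gb k1 k2]]].
apply: (@finite_fin ('I_a * 'I_b)%type _ (fun p => (fa p.1, fb p.2))).
exists (fun q => (ga q.1, gb q.2)); case=> x y /=; by rewrite ?h1 ?k1 ?h2 ?k2.
Qed.

Lemma card_uniq (T T' : Type) (h : T -> T') n n' :
  bijective h -> card_is T n -> card_is T' n' -> n = n'.
Proof.
move=> [h' hK h'K] [f [f' fK f'K]] [g [g' gK g'K]].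
have i1 : injective (fun i => g' (h (f i))).
  move=> x y /(congr1 g); rewrite !g'K => /(congr1 h'); rewrite !hK.
  by move/(congr1 f'); rewrite !fK.
have i2 : injective (fun i => f' (h' (g i))).
  move=> x y /(congr1 f); rewrite !f'K => /(congr1 h); rewrite !h'K.
  by move/(congr1 g'); rewrite !gK.
have := leq_card _ i1; have := leq_card _ i2; rewrite !card_ord => l1 l2.
by apply/eqP; rewrite eqn_leq l1 l2.
Qed.

Lemma rep_exists (X U : Type) (R : X -> X -> Prop) (phi : X -> U) :
  finite_type U -> (forall x y, R x y -> R y x) ->
  (forall x y z, R x y -> R y z -> R x z) ->
  (forall x y, phi x = phi y -> R x y) ->
  exists n (r : 'I_n -> X), (forall x, exists i, R x (r i)) /\
                            (forall i j, R (r i) (r j) -> i = j).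
Proof.
move=> [m [b [b' bK b'K]]] Rs Rt Hphi.
pose g x := b' (phi x).
have Hg : forall x y, g x = g y -> R x y.
  by move=> x y /(congr1 b); rewrite /g !b'K; exact: Hphi.
pose c x : {set 'I_m} := [set j | pb (exists y, R x y /\ g y = j)].
have Hc : forall x y, c x = c y <-> R x y.
  move=> x y; split.
  - move=> e; have : g x \in c y.
      by rewrite -e inE; apply/pbP; exists x; split=> //; apply: Hg.
    rewrite inE => /pbP [y' [Ry' ey']].
    exact: (Rt _ _ _ (Rs _ _ (Hg _ _ ey')) (Rs _ _ Ry')).
  - move=> Rxy; apply/setP => j; rewrite !inE.
    apply/pbP/pbP => -[y' [h1 h2]]; exists y'; split=> //.
      exact: (Rt _ _ _ (Rs _ _ Rxy) h1).
    exact: (Rt _ _ _ Rxy h1).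
pose I := [set v | pb (exists x, c x = v)].
have hI : forall i : 'I_#|I|, exists x, c x = enum_val i.
  by move=> i; have := enum_valP i; rewrite inE => /pbP.
pose r i := proj1_sig (constructive_indefinite_description _ (hI i)).
have hr : forall i, c (r i) = enum_val i.
  move=> i; exact: (proj2_sig (constructive_indefinite_description _ (hI i))).
exists #|I|, r; split.
- move=> x; have cx : c x \in I by rewrite inE; apply/pbP; exists x.
  exists (enum_rank_in cx (c x)); apply/Hc; rewrite hr enum_rankK_in //.
- by move=> i j /Hc; rewrite !hr; exact: enum_val_inj.
Qed.

Lemma efin_aut (C : groupoid) : essentially_finite C -> forall a : Ob C, finite_type (Mor a a).
Proof.
move=> [K [[_ finM] [F [G [[eta] _]]]]] a.
apply: (@fin_inj _ _ (@fm _ _ F a a)).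
  move=> f f' e; apply: (@comp_cancel_r _ _ _ _ (ntc eta a)).
  have n1 : comp f (ntc eta a) = comp (ntc eta a) (fm G (fm F f)) := nt_nat eta f.
  have n2 : comp f' (ntc eta a) = comp (ntc eta a) (fm G (fm F f')) := nt_nat eta f'.
  by rewrite n1 n2 e.
apply: (@fin_inj _ _ (fun m : Mor (fo F a) (fo F a) =>
          existT _ (fo F a) (existT _ (fo F a) m)) _ finM).
move=> m m' e; have e1 := inj_pairT2 _ _ _ _ _ e; exact: (inj_pairT2 _ _ _ _ _ e1).
Qed.

Lemma efin_pi0 (C : groupoid) : essentially_finite C ->
  exists m (phi : Ob C -> 'I_m), forall a b, phi a = phi b -> inhabited (Mor a b).
Proof.
move=> [K [[[m [b [b' bK b'K]]] _] [F [G [[eta] _]]]]].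
exists m, (fun a => b' (fo F a)) => x y /(congr1 b); rewrite !b'K => e.
have [mm] : inhabited (Mor (fo G (fo F x)) (fo G (fo F y))).
  by rewrite e; constructor; exact: idm.
constructor; exact: (comp (ntc eta y) (comp mm (inv (ntc eta x)))).
Qed.

Lemma fchoice (A B : Type) (P : A -> B -> Prop) :
  (forall a, exists b, P a b) -> exists f : A -> B, forall a, P a (f a).
Proof.
move=> h; exists (fun a => proj1_sig (constructive_indefinite_description _ (h a))).
move=> a; exact: (proj2_sig (constructive_indefinite_description _ (h a))).
Qed.

Section Fib.
Variables (G1 G2 H : groupoid) (P1 : functor H G1) (P2 : functor H G2).
Variables (x1 : Ob G1) (x2 : Ob G2).
Local Notation X := (FibSpanOb P1 P2 x1 x2).
Local Notation PG := (prod_groupoid G1 G2).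

Definition img (x y : X) (m : Mor (proj1_sig x) (proj1_sig y)) : @Mor PG (x1, x2) (x1, x2) :=
  castHom (proj2_sig x) (proj2_sig y) (fm (pair_functor P1 P2) m).

Lemma img_comp (x y z : X) (g : Mor (proj1_sig y) (proj1_sig z))
  (f : Mor (proj1_sig x) (proj1_sig y)) :
  img (comp g f) = comp (img g) (img f).
Proof.
by rewrite /img fm_comp (castHom_comp (proj2_sig x) (proj2_sig y) (proj2_sig z)).
Qed.

Lemma img_inv (x y : X) (f : Mor (proj1_sig x) (proj1_sig y)) :
  img (inv f) = inv (img f).
Proof. by rewrite /img fm_inv castHom_inv. Qed.

Lemma img_id (x : X) : img (idm (proj1_sig x)) = idm _.
Proof. by rewrite /img fm_id castHom_id. Qed.

Lemma fib_refl (x : X) : inhabited (FibSpanHom x x).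
Proof. exact: (inhabits (exist _ (idm _) (img_id x))). Qed.

Lemma fib_sym (x y : X) : inhabited (FibSpanHom x y) -> inhabited (FibSpanHom y x).
Proof.
case=> -[f hf]; have hf' : img f = idm _ := hf.
constructor; exists (inv f); have : img (inv f) = idm _ by rewrite img_inv hf' inv_id.
by [].
Qed.

Lemma fib_trans (x y z : X) : inhabited (FibSpanHom x y) -> inhabited (FibSpanHom y z) ->
  inhabited (FibSpanHom x z).
Proof.
case=> -[f hf]; case=> -[g hg]; have hf' : img f = idm _ := hf.
have hg' : img g = idm _ := hg.
constructor; exists (comp g f).
have : img (comp g f) = idm _ by rewrite img_comp hf' hg' comp_id_l.
by [].
Qed.

Lemma comp_fib (x y z : X) (mx : Mor (proj1_sig x) (proj1_sig z))
  (my : Mor (proj1_sig y) (proj1_sig z)) : img mx = img my -> inhabited (FibSpanHom x y).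
Proof.
move=> e; constructor; exists (comp (inv my) mx).
have : img (comp (inv my) mx) = idm _ by rewrite img_comp img_inv e inv_l.
by [].
Qed.

Lemma comp_fib_gen (x y z z' : X) (ez : z = z') (mx : Mor (proj1_sig x) (proj1_sig z))
  (my : Mor (proj1_sig y) (proj1_sig z')) : img mx = img my -> inhabited (FibSpanHom x y).
Proof. by case: z' / ez my => my; apply: comp_fib. Qed.

Lemma aut_card (x y : X) (m : Mor (proj1_sig x) (proj1_sig y)) na nb :
  card_is (FibSpanHom x x) na -> card_is (FibSpanHom y y) nb -> na = nb.
Proof.
have hc : forall (u v : X) (m : Mor (proj1_sig u) (proj1_sig v)) (k : FibSpanHom u u),
    img (comp m (comp (proj1_sig k) (inv m))) = idm _.
  move=> u v m' k; have pk : img (proj1_sig k) = idm _ := proj2_sig k.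
  by rewrite !img_comp img_inv pk comp_id_l inv_r.
pose cj (u v : X) (m' : Mor (proj1_sig u) (proj1_sig v)) (k : FibSpanHom u u) : FibSpanHom v v :=
  exist _ (comp m' (comp (proj1_sig k) (inv m'))) (hc u v m' k).
apply: (@card_uniq _ _ (cj x y m)); exists (cj y x (inv m)) => k; apply: sig_eq => /=;
  rewrite inv_inv.
- by rewrite !comp_assoc inv_l comp_id_l -comp_assoc inv_l comp_id_r.
- by rewrite !comp_assoc inv_r comp_id_l -comp_assoc inv_r comp_id_r.
Qed.

Variables (rho1 : vrep G1) (rho2 : vrep G2)
  (sigma : vnat (vrep_comp rho1 P1) (vrep_comp rho2 P2)).

Lemma key (A B : Ob H) (m : Mor A B) (a1 : fo P1 A = x1) (b1 : fo P1 B = x1)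
  (a2 : fo P2 A = x2) (b2 : fo P2 B = x2) (v : rob rho1 x1) :
  castV rho2 b2 (vnc sigma B (castV rho1 (esym b1) (rm rho1 (castHom a1 b1 (fm P1 m)) v)))
  = rm rho2 (castHom a2 b2 (fm P2 m)) (castV rho2 a2 (vnc sigma A (castV rho1 (esym a1) v))).
Proof.
rewrite castV_rm castVK.
have e : vnc sigma B (rm rho1 (fm P1 m) (castV rho1 (esym a1) v)) =
         rm rho2 (fm P2 m) (vnc sigma A (castV rho1 (esym a1) v)) := vn_nat sigma m _.
by rewrite e castV_rm castVK.
Qed.

Lemma sig_nat (x y : X) (m : Mor (proj1_sig x) (proj1_sig y)) (v : rob rho1 x1) :
  sigma_fib sigma y (rm rho1 (img m).1 v) = rm rho2 (img m).2 (sigma_fib sigma x v).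
Proof.
rewrite /img castHom_fst castHom_snd.
exact: (key m (f_equal fst (proj2_sig x)) (f_equal fst (proj2_sig y))
              (f_equal snd (proj2_sig x)) (f_equal snd (proj2_sig y)) v).
Qed.

End Fib.

Import GRing.Theory.

Theorem lemma2p7 (G1 G2 H : groupoid) (P1 : functor H G1) (P2 : functor H G2)
  (span_fibrant : fibrant_span P1 P2)
  (efin1 : essentially_finite G1) (efin2 : essentially_finite G2)
  (efinH : essentially_finite H)
  (rho1 : vrep G1) (rho2 : vrep G2)
  (sigma : vnat (vrep_comp rho1 P1) (vrep_comp rho2 P2))
  (x1 : Ob G1) (x2 : Ob G2) :
  ((exists (n : nat) (r : 'I_n -> FibSpanOb P1 P2 x1 x2), is_rep_system r) /\
   (forall y : FibSpanOb P1 P2 x1 x2, finite_type (FibSpanHom y y)) /\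
   finite_type (Mor x2 x2)) /\
  (forall (n2 : nat), card_is (Mor x2 x2) n2 ->
   forall (n : nat) (r : 'I_n -> FibSpanOb P1 P2 x1 x2) (a : 'I_n -> nat),
   is_rep_system r -> (forall i, card_is (FibSpanHom (r i) (r i)) (a i)) ->
   forall (n' : nat) (r' : 'I_n' -> FibSpanOb P1 P2 x1 x2) (a' : 'I_n' -> nat),
   is_rep_system r' -> (forall i, card_is (FibSpanHom (r' i) (r' i)) (a' i)) ->
   forall v : rob rho1 x1,
     S_sigma sigma n2 r a v = S_sigma sigma n2 r' a' v) /\
  (forall (n2 : nat), card_is (Mor x2 x2) n2 ->
   forall (n : nat) (r : 'I_n -> FibSpanOb P1 P2 x1 x2) (a : 'I_n -> nat),
   is_rep_system r -> (forall i, card_is (FibSpanHom (r i) (r i)) (a i)) ->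
   forall (v : rob rho1 x1) (g : Mor x2 x2),
     rm rho2 g (S_sigma sigma n2 r a v) = S_sigma sigma n2 r a v).
Proof.
split; [split; [|split] | split].
-
  have [m [phi0 Hphi0]] := efin_pi0 efinH.
  case: (excluded_middle_informative (inhabited (FibSpanOb P1 P2 x1 x2))) => [inhX|nX];
    last first.
    have f : 'I_0 -> FibSpanOb P1 P2 x1 x2.
      by case=> k hk; exfalso; rewrite ltn0 in hk.
    exists 0, f; split; last by case.
    by move=> x; exfalso; apply: nX; exact: (inhabits x).
  pose Z (x : FibSpanOb P1 P2 x1 x2) : FibSpanOb P1 P2 x1 x2 :=
    epsilon inhX (fun z => phi0 (proj1_sig z) = phi0 (proj1_sig x)).
  have HZ : forall x, phi0 (proj1_sig (Z x)) = phi0 (proj1_sig x).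
    move=> x; rewrite /Z; apply: (epsilon_spec inhX (fun z : FibSpanOb P1 P2 x1 x2 => phi0 (proj1_sig z) = phi0 (proj1_sig x))); by exists x.
  have HZe : forall x y, phi0 (proj1_sig x) = phi0 (proj1_sig y) -> Z x = Z y.
    by move=> x y e; rewrite /Z e.
  have mx : forall x : FibSpanOb P1 P2 x1 x2, Mor (proj1_sig x) (proj1_sig (Z x)).
    move=> x; exact: (epsilon (Hphi0 _ _ (esym (HZ x))) (fun _ => True)).
  have := @rep_exists (FibSpanOb P1 P2 x1 x2)
     ('I_m * @Mor (prod_groupoid G1 G2) (x1, x2) (x1, x2))%type
     (fun x y => inhabited (FibSpanHom x y))
     (fun x => (phi0 (proj1_sig x), img (mx x))).
  apply.
  + apply: fin_prod; last by apply: fin_prod; apply: efin_aut.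
    by exists m, id; exists id.
  + exact: fib_sym.
  + exact: fib_trans.
  + by move=> x y [e1 e2]; exact: (comp_fib_gen (HZe _ _ e1) e2).
- move=> y; apply: (@fin_inj _ _ (@proj1_sig _ _)); last exact: efin_aut.
  by move=> u w; apply: sig_eq.
- exact: efin_aut.
- move=> n2 _ n r a [rcov runi] ha n' r' a' [rcov' runi'] ha' v.
  rewrite /S_sigma; congr (GRing.scale _ _).
  have [pi Hpi] := fchoice (fun i => rcov' (r i)).
  have [pi' Hpi'] := fchoice (fun i => rcov (r' i)).
  have c1 : cancel pi pi'.
    by move=> i; apply: runi; apply: fib_sym; apply: fib_trans (Hpi i) (Hpi' (pi i)).
  have c2 : cancel pi' pi.
    by move=> i; apply: runi'; apply: fib_sym; apply: fib_trans (Hpi' i) (Hpi (pi' i)).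
  rewrite [RHS](reindex pi) /=; last by apply: onW_bij; exists pi'.
  apply: eq_bigr => i _.
  case: (Hpi i) => -[phi hphi].
  have hphi' : img phi = idm _ := hphi.
  rewrite (aut_card phi (ha i) (ha' (pi i))).
  have := sig_nat sigma phi v; rewrite hphi' /= !rm_id => ->; by [].
- move=> n2 _ n r a [rcov runi] ha v g.
  pose w : @Mor (prod_groupoid G1 G2) (x1, x2) (x1, x2) := (idm x1, g).
  have step : forall i, exists j (mm : Mor (proj1_sig (r i)) (proj1_sig (r j))), img mm = w.
    move=> i.
    have := span_fibrant (proj1_sig (r i)) (x1, x2)
              (@castHom (prod_groupoid G1 G2) (x1, x2) (x1, x2) (x1, x2)
                (fo (pair_functor P1 P2) (proj1_sig (r i))) erefl (esym (proj2_sig (r i))) (inv w)).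
    case=> E' [e [k hk]].
    pose y : FibSpanOb P1 P2 x1 x2 := exist _ E' e.
    have imk : img (x := y) (y := r i) k = inv w.
      rewrite /img.
      have <- : castHom (erefl _) (proj2_sig (r i)) (castHom e (erefl _) (fm (pair_functor P1 P2) k))
             = castHom e (proj2_sig (r i)) (fm (pair_functor P1 P2) k).
        by rewrite castHom_trans; apply: castHom_irr.
      by rewrite hk castHom_trans castHom_refl.
    case: (rcov y) => j [[phi hphi]].
    have hphi' : img phi = idm _ := hphi.
    exists j, (comp phi (inv k)).
    by rewrite img_comp img_inv imk hphi' comp_id_l inv_inv.
  have [tau Htau] := fchoice step.
  have tinj : injective tau.
    move=> i i' e; apply: runi.
    have [mi hmi] := Htau i; have [mi' hmi'] := Htau i'.
    apply: (comp_fib_gen (congr1 r e) (mx := mi) (my := mi')).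
    by rewrite hmi hmi'.
  rewrite /S_sigma linearZ linear_sum; congr (GRing.scale _ _).
  rewrite [RHS](reindex_inj tinj) /=.
  apply: eq_bigr => i _.
  have [mi hmi] := Htau i.
  rewrite linearZ (aut_card mi (ha i) (ha (tau i))).
  have := sig_nat sigma mi v; rewrite hmi /= rm_id => ->; by [].
Qed.
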